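(* Let $p$ be an odd prime, let $d>1$ be an integer, and let $q$ be an even power of $p$ with $q \equiv 1 \pmod{2d}$. Then the clique number of the generalized Paley graph $GP(q,d)$ satisfies $\omega\big(GP(q,d)\big)=\sqrt{q}$ if and only if $d \mid (\sqrt{q}+1)$. In particular, if $d \nmid (\sqrt{q}+1)$, then $\omega\big(GP(q,d)\big) \leq \sqrt{q}-1$.
   Context: For a prime power $q$ and an integer $d>1$ with $d \mid q-1$, the $d$-Paley graph $GP(q,d)$ is the graph with vertex set $\mathbb{F}_q$ in which two distinct vertices $x,y$ are adjacent if and only if $x-y$ is a $d$-th power in $\mathbb{F}_q^*$. $\omega(X)$ denotes the clique number (size of a largest clique) of a graph $X$. *)

(* Defs.v *)
From mathcomp Require Import all_boot all_algebra all_field.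
Set Implicit Arguments. Unset Strict Implicit. Unset Printing Implicit Defensive.
Import GRing.Theory.
Local Open Scope ring_scope.

Definition is_dth_power (F : finFieldType) (d : nat) (x : F) : bool :=
  (x != 0) && [exists y : F, y ^+ d == x].

Definition paley_adj (F : finFieldType) (d : nat) (x y : F) : bool :=
  (x != y) && is_dth_power d (x - y).

Definition is_paley_clique (F : finFieldType) (d : nat) (S : {set F}) : bool :=
  [forall x in S, forall y in S, (x != y) ==> paley_adj d x y].

Definition paley_clique_number (F : finFieldType) (d : nat) : nat :=
  \max_(S : {set F} | is_paley_clique d S) #|S|.

(* Main.v *)
Require Import Defs.
From mathcomp Require Import all_boot all_algebra all_field.
From mathcomp Require Import cyclic zify ring.
Set Implicit Arguments. Unset Strict Implicit. Unset Printing Implicit Defensive.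
Import GRing.Theory Num.Theory.
Local Open Scope ring_scope.

Lemma prim_root_F (F : finFieldType) :
  exists z : F, (#|F|.-1).-primitive_root z.
Proof.
pose rs := enum [set~ (0:F)].
have h1 : (0 < #|F|.-1)%N.
  have := finNzRing_gt1 F; case: #|F| => [|[|n]] //.
have : has (#|F|.-1).-primitive_root rs.
  apply: has_prim_root => //.
  - apply/allP => x; rewrite mem_enum !inE => nz.
    rewrite unity_rootE; apply/eqP.
    have := expf_card x; have := finNzRing_gt1 F.
    case E: #|F| => [|n] // _; rewrite exprS /= => H.
    by apply: (mulfI nz); rewrite H mulr1.
  - exact: enum_uniq.
  -
    by rewrite -cardE cardsC1.
by case/hasP=> z _ hz; exists z.
Qed.

Section Main.
Variables (F : finFieldType) (d m : nat).
Hypotheses (hq : #|F| = (m * m)%N) (hm : (1 < m)%N) (hd : (1 < d)%N)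
  (h2d : (2 * d %| m * m - 1)%N).
Variable z : F.
Hypothesis hz : (#|F|.-1).-primitive_root z.

Local Notation n := (#|F|.-1).
Local Notation D := (@is_dth_power F d).
Implicit Types x y : F.

Lemma n_eq : n = (m * m - 1)%N.
Proof. by rewrite hq; lia. Qed.

Lemma dvd_dn : (d %| n)%N.
Proof. by rewrite n_eq; apply: dvdn_trans h2d; apply: dvdn_mull. Qed.

Lemma n_gt0 : (0 < n)%N.
Proof. rewrite n_eq; nia. Qed.

Lemma z_neq0 : z != 0.
Proof.
apply/eqP=> z0; have := prim_expr_order hz; rewrite z0 expr0n.
by case: n n_gt0 => // k _ /eqP; rewrite eq_sym oner_eq0.
Qed.

Lemma expz_neq0 i : z ^+ i != 0.
Proof. by rewrite expf_neq0 // z_neq0. Qed.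

Lemma nz_exp x : x != 0 -> exists i, (i < n)%N /\ x = z ^+ i.
Proof.
move=> nz.
have hx : x ^+ n = 1.
  have := expf_card x; rewrite -(prednK (ltnW (finNzRing_gt1 F))) exprS => H.
  by apply: (mulfI nz); rewrite H mulr1.
by have [i ->] := prim_rootP hz hx; exists i.
Qed.

Lemma Dnz x : D x -> x != 0.
Proof. by case/andP. Qed.

Lemma Dz i : D (z ^+ i) = (d %| i)%N.
Proof.
rewrite /is_dth_power expz_neq0 /=; apply/existsP/idP.
- case=> y /eqP hy.
  have ynz : y != 0.
    by apply/eqP=> y0; move: hy; rewrite y0 expr0n; case: d hd => // ? _ /eqP;
      rewrite eq_sym (negbTE (expz_neq0 i)).
  have [j [_ hj]] := nz_exp ynz; subst y.
  move/eqP: hy; rewrite -exprM (eq_prim_root_expr hz) => /eqP H.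
  have := congr1 (fun a => a %% d)%N H.
  rewrite !modn_dvdm ?dvd_dn // => H2.
  by rewrite /dvdn -H2 modnMl.
- move=> dvd; exists (z ^+ (i %/ d)); by rewrite -exprM divnK.
Qed.

Lemma DM x y : D x -> D y -> D (x * y).
Proof.
case/andP=> nx /existsP[a /eqP ha] /andP[ny /existsP[b /eqP hb]].
rewrite /is_dth_power mulf_neq0 //=; apply/existsP; exists (a * b).
by rewrite exprMn ha hb.
Qed.

Lemma DV x : D x -> D (x^-1).
Proof.
case/andP=> nx /existsP[a /eqP ha].
rewrite /is_dth_power invr_eq0 nx /=; apply/existsP; exists (a^-1).
by rewrite exprVn ha.
Qed.

Lemma Dm1 : D (-1).
Proof.
have h2 : (2 %| n)%N by rewrite n_eq; apply: dvdn_trans h2d; apply: dvdn_mulr.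
set w := z ^+ (n %/ 2).
have hw : w ^+ 2 = 1 by rewrite -exprM divnK // prim_expr_order.
have w1 : w != 1.
  rewrite /w -(prim_order_dvd hz).
  apply/negP=> /dvdn_leq; have := n_gt0.
  have : (0 < n %/ 2)%N by rewrite divn_gt0 //; apply: dvdn_leq; [exact: n_gt0|].
  lia.
have : w == -1 by move/eqP: hw; rewrite sqrf_eq1 (negbTE w1).
move/eqP <-; rewrite Dz.
have [t ht] : exists t, n = (2 * d * t)%N.
  by rewrite n_eq; case/dvdnP: h2d => t ->; exists t; rewrite mulnC.
by rewrite ht -mulnA mulKn // dvdn_mulr.
Qed.

Lemma DN x : D (- x) = D x.
Proof.
apply/idP/idP => H.
  by rewrite -[x]opprK -mulN1r; apply: DM Dm1 H.
by rewrite -mulN1r; apply: DM Dm1 H.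
Qed.

Lemma z_notD : ~~ D z.
Proof. by rewrite -[z]expr1 Dz; apply/negP => /dvdn_leq; lia. Qed.


Lemma clique_adj (S : {set F}) x y : is_paley_clique d S -> x \in S -> y \in S -> x != y ->
  D (x - y).
Proof.
move=> /forallP/(_ x)/implyP H xS yS nxy.
by have /forallP/(_ y)/implyP/(_ yS)/implyP/(_ nxy)/andP[] := H xS.
Qed.

Lemma inj_nu (S : {set F}) nu : is_paley_clique d S -> nu != 0 -> ~~ D nu ->
  {in setX S S &, injective (fun u : F * F => u.1 + nu * u.2)}.
Proof.
move=> cl nuz nuD [a b] [a' b'] /setXP[aS bS] /setXP[a'S b'S] /= H.
have e : a - a' = nu * (b' - b).
  have : a - a' - nu * (b' - b) = (a + nu * b) - (a' + nu * b') by ring.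
  by rewrite H subrr => /eqP; rewrite subr_eq0 => /eqP.
have [eq_a | ne_a] := eqVneq a a'.
  subst a'; move: e; rewrite subrr => /esym/eqP; rewrite mulf_eq0 (negbTE nuz) /=.
  by rewrite subr_eq0 => /eqP ->.
have nb : b' != b by apply: contra ne_a => /eqP eb; rewrite -subr_eq0 e eb subrr mulr0.
have : D ((a - a') * (b' - b)^-1) by apply: DM; [apply: clique_adj cl _ _ _|apply/DV/(clique_adj cl)].
by rewrite e mulfK ?subr_eq0 // (negbTE nuD).
Qed.

Lemma clique_card (S : {set F}) : is_paley_clique d S -> (#|S| <= m)%N.
Proof.
move=> cl; have H := card_in_imset (inj_nu cl z_neq0 z_notD).
have := subset_leq_card (subsetT [set (fun u : F * F => u.1 + z * u.2) x | x in setX S S]).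
rewrite H cardsX cardsT hq => H2.
by apply/negP => /negP; rewrite -ltnNge => H3; move: H2; rewrite leqNgt; apply/negP/negPn; nia.
Qed.


Section PartB.
Hypothesis hfrob : forall x y : F, (x - y) ^+ m = x ^+ m - y ^+ m.
Hypothesis hdm : (d %| m + 1)%N.

Lemma subfield_clique : is_paley_clique d [set x : F | x ^+ m == x].
Proof.
apply/forallP => x; apply/implyP => xS; apply/forallP => y; apply/implyP => yS.
apply/implyP => nxy; rewrite /paley_adj nxy /=.
have wnz : x - y != 0 by rewrite subr_eq0.
have hw : (x - y) ^+ m = x - y by move: xS yS; rewrite !inE => /eqP hx /eqP hy; rewrite hfrob hx hy.
move: hw; have [i [_ ->]] := nz_exp wnz => hw; rewrite Dz.
have : z ^+ (i * (m - 1)) = 1.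
  apply: (mulIf (expz_neq0 i)); rewrite mul1r -exprD.
  by rewrite -hw -exprM; congr (_ ^+ _); nia.
move/eqP; rewrite -(prim_order_dvd hz) n_eq => H.
have : ((m + 1) * (m - 1) %| i * (m - 1))%N.
  by have -> : ((m + 1) * (m - 1) = m * m - 1)%N by nia.
rewrite dvdn_pmul2r; last by lia.
by move/(dvdn_trans hdm).
Qed.

Lemma lt_aux (j : nat) : (j < m - 1)%N -> ((m + 1) * j < m * m - 1)%N.
Proof.
move=> hj; have := leq_mul (leqnn (m + 1)) hj.
have -> : ((m + 1) * (m - 1) = m * m - 1)%N by nia.
rewrite mulnS; lia.
Qed.

Lemma subfield_card : (m <= #|[set x : F | x ^+ m == x]|)%N.
Proof.
set S := [set x : F | x ^+ m == x].
pose T := [set z ^+ ((m + 1) * val j) | j : 'I_(m - 1)].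
have Tc : #|T| = (m - 1)%N.
  rewrite card_imset ?card_ord // => j j' /eqP.
  rewrite (eq_prim_root_expr hz) !modn_small => [/eqP H||]; last first.
  - rewrite n_eq; apply: lt_aux; exact: ltn_ord.
  - rewrite n_eq; apply: lt_aux; exact: ltn_ord.
  by apply: val_inj; move/eqP: H; rewrite eqn_pmul2l ?addn1 // => /eqP.
have TS : T \subset S :\ 0.
  apply/subsetP => x /imsetP[j _ ->]; rewrite !inE expz_neq0 /=.
  rewrite -exprM (eq_prim_root_expr hz).
  have -> : ((m + 1) * j * m = j * n + (m + 1) * j)%N by rewrite n_eq; nia.
  by rewrite modnMDl.
have := subset_leq_card TS; rewrite Tc.
have := cardsD1 0 S; rewrite inE expr0n /=.
have -> : (m == 0%N) = false by lia.
rewrite eqxx /= => ->; case: (#|S :\ 0|) => [|k] /=; lia.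
Qed.

End PartB.


Section PartC.
Variable psi : F -> algC.
Hypothesis psiD : forall x y, psi (x + y) = psi x * psi y.
Variable r : nat.
Hypothesis hr : (0 < r)%N.
Hypothesis psi_root : forall x, psi x ^+ r = 1.
Variable x0 : F.
Hypothesis psi_nt : psi x0 != 1.

Lemma psi_neq0 x : psi x != 0.
Proof.
apply/eqP=> h; have := psi_root x; rewrite h expr0n.
by case: r hr => // k _ /eqP; rewrite eq_sym oner_eq0.
Qed.

Lemma psi0 : psi 0 = 1.
Proof.
have := psiD 0 0; rewrite addr0 => h.
by apply: (mulfI (psi_neq0 0)); rewrite -h mulr1.
Qed.

Lemma sum_psi0 : \sum_x psi x = 0.
Proof.
have h : \sum_x psi x = \sum_x psi x * psi x0.
  rewrite (reindex_inj (addIr x0)) /=; apply: eq_bigr => x _; exact: psiD.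
have : (\sum_x psi x) * (psi x0 - 1) = 0.
  by rewrite mulrBr mulr1 mulr_suml -h subrr.
by move/eqP; rewrite mulf_eq0 subr_eq0 (negbTE psi_nt) orbF => /eqP.
Qed.

Lemma sum_psi a : a != 0 -> \sum_x psi (a * x) = 0.
Proof.
by move=> anz; rewrite -[RHS]sum_psi0 [RHS](reindex_inj (mulfI anz)).
Qed.

Lemma Ssum x : \sum_b psi (b * x) = if x == 0 then (#|F|)%:R else 0.
Proof.
have [->|xnz] := eqVneq x 0.
  by under eq_bigr do rewrite mulr0 psi0; rewrite sumr_const cardT -cardE.
by under eq_bigr do rewrite mulrC; rewrite sum_psi.
Qed.

Lemma sum_delta (A : {set F}) (t : F) (k : algC) :
  \sum_(y in A) (if y == t then k else 0) = if t \in A then k else 0.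
Proof.
rewrite big_mkcond (bigD1 t) //= eqxx big1 ?addr0 // => y /negbTE ->.
by case: (y \in A).
Qed.

Variable C : {set F}.
Hypothesis clC : is_paley_clique d C.
Hypothesis hC : #|C| = m.

Definition Ch b := \sum_(c in C) psi (b * c).

Lemma prod_zero b nu : b != 0 -> nu != 0 -> ~~ D nu -> Ch b * Ch (nu * b) = 0.
Proof.
move=> bnz nunz nuD.
pose f := fun u : F * F => u.1 + nu * u.2.
have finj := inj_nu clC nunz nuD.
have imT : f @: setX C C = [set: F].
  apply/eqP; rewrite eqEcard subsetT /= card_in_imset // cardsX cardsT hC hq.
  by [].
have -> : Ch b * Ch (nu * b) = \sum_(u in setX C C) psi (b * f u).
  rewrite /Ch big_distrlr /= pair_big_dep /=.
  apply: eq_big => [[u1 u2]|[u1 u2] _] /=; first by rewrite in_setX.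
  rewrite -psiD /f /=; congr psi; ring.
transitivity (\sum_(x in f @: setX C C) psi (b * x)); first by rewrite big_imset.
rewrite imT.
rewrite (eq_bigl (fun _ => true)); last by move=> x; rewrite in_setT.
exact: sum_psi.
Qed.


Definition Chm b := \sum_(c in C) psi (- (b * c)).
Definition Dset := [set y : F | D y].
Definition eta b := \sum_(y in Dset) psi (b * y).

Lemma G_expand b : Ch b * Chm b = \sum_(c in C) \sum_(c' in C) psi (b * (c - c')).
Proof.
rewrite /Ch /Chm big_distrlr /=; apply: eq_bigr => c _; apply: eq_bigr => c' _.
by rewrite -psiD; congr psi; ring.
Qed.

Lemma sumG : \sum_b Ch b * Chm b = (#|F|)%:R *+ m.
Proof.
under eq_bigr do rewrite G_expand.
rewrite exchange_big /= -hC -sumr_const; apply: eq_bigr => c cC.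
rewrite exchange_big /=.
under eq_bigr do rewrite Ssum subr_eq0 eq_sym.
by rewrite sum_delta cC.
Qed.

Lemma DsetC c c' : c \in C -> c' \in C -> (c' - c \in Dset) = (c' != c).
Proof.
move=> cC c'C; rewrite inE; apply/idP/idP.
  by move/Dnz; rewrite subr_eq0.
by move=> ne; apply: clique_adj clC c'C cC ne.
Qed.

Lemma sumT : \sum_b Ch b * Chm b * eta b = ((#|F|)%:R *+ m - (#|F|)%:R) *+ m.
Proof.
have E b : Ch b * Chm b * eta b =
    \sum_(c in C) \sum_(c' in C) \sum_(y in Dset) psi (b * (c - c' + y)).
  rewrite G_expand /eta mulr_suml; apply: eq_bigr => c _.
  rewrite mulr_suml; apply: eq_bigr => c' _; rewrite mulr_sumr; apply: eq_bigr => y _.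
  by rewrite -!psiD; congr psi; ring.
under eq_bigr do rewrite E.
rewrite exchange_big /= -hC -sumr_const; apply: eq_bigr => c cC.
rewrite exchange_big /=.
have -> : (#|F|)%:R *+ #|C| - (#|F|)%:R = \sum_(c0 in C) ((#|F|)%:R - (if c0 == c then (#|F|)%:R else 0) : algC).
  by rewrite sumrB sumr_const sum_delta cC.
apply: eq_bigr => c' c'C.
rewrite exchange_big /=.
under eq_bigr do rewrite Ssum addrC addr_eq0 opprB.
rewrite sum_delta DsetC //.
by case: (c' == c) => /=; rewrite ?subrr ?subr0.
Qed.


Lemma G0 : Ch 0 * Chm 0 = (m * m)%:R.
Proof.
rewrite /Ch /Chm.
under eq_bigr do rewrite mul0r psi0.
under [X in _ * X]eq_bigr do rewrite mul0r oppr0 psi0.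
by rewrite sumr_const hC natrM.
Qed.

Lemma eta0 : eta 0 = (#|Dset|)%:R.
Proof. by rewrite /eta; under eq_bigr do rewrite mul0r psi0; rewrite sumr_const. Qed.

Lemma eta_eq b b0 : b != 0 -> b0 != 0 -> Ch b * Chm b != 0 ->
  Ch b0 * Chm b0 != 0 -> eta b = eta b0.
Proof.
move=> bnz b0nz; rewrite !mulf_eq0 !negb_or => /andP[hb _] /andP[hb0 _].
set t := b / b0.
have tnz : t != 0 by rewrite /t mulf_neq0 ?invr_eq0.
have Dt : D t.
  apply/negPn/negP => nD; have := prod_zero b0nz tnz nD.
  by rewrite /t divfK // => /eqP; rewrite mulf_eq0 (negbTE hb) (negbTE hb0).
rewrite /eta [RHS](reindex_inj (mulfI tnz)) /=.
apply: eq_big => [y|y _]; last by congr psi; rewrite /t; field.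
rewrite !inE; apply/idP/idP => H; first exact: DM.
by have := DM (DV Dt) H; rewrite mulKf.
Qed.

Lemma key : exists E, E \in Aint /\
  ((#|F|)%:R *+ m - (#|F|)%:R) *+ m =
    (m * m)%:R * (#|Dset|)%:R + E * ((#|F|)%:R *+ m - (m * m)%:R) :> algC.
Proof.
have hsG := sumG; rewrite (bigD1 0) //= G0 in hsG.
case: (pickP (fun b => (b != 0) && (Ch b * Chm b != 0))) => [b0 /andP[b0nz Gb0]|none]; last first.
  exfalso; move: hsG; rewrite big1 ?addr0; last first.
    by move=> b bnz; have := none b; rewrite bnz /= => /negbFE/eqP.
  move/eqP; rewrite hq -mulrnA eqr_nat => /eqP H.
  have : (m * m * 1 < m * m * m)%N by rewrite ltn_mul2l; lia.
  by rewrite muln1 -H ltnn.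
exists (eta b0); split.
  apply: rpred_sum => y _; apply: (Aint_unity_root hr).
  by rewrite unity_rootE psi_root.
rewrite -sumT (bigD1 0) //= G0 eta0; congr (_ + _).
have -> : (#|F|)%:R *+ m - (m * m)%:R = \sum_(b | b != 0) Ch b * Chm b :> algC.
  by rewrite -hsG addrAC subrr add0r.
rewrite mulr_sumr; apply: eq_bigr => b bnz.
have [->|Gb] := eqVneq (Ch b * Chm b) 0; first by rewrite !mul0r mulr0.
by rewrite (eta_eq bnz b0nz Gb Gb0) mulrC.
Qed.


Lemma cardDset : (#|Dset| * d)%N = n.
Proof.
have hd0 : (0 < d)%N by lia.
have -> : Dset = [set z ^+ (d * val i) | i : 'I_(n %/ d)].
  apply/setP => x; rewrite inE; apply/idP/imsetP.
  - move=> Dx; have [j [jn ej]] := nz_exp (Dnz Dx); rewrite ej Dz in Dx.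
    have lt : (j %/ d < n %/ d)%N.
      rewrite -(ltn_pmul2l hd0) !(mulnC d) !divnK ?dvd_dn //.
    by exists (Ordinal lt) => //=; rewrite ej mulnC divnK.
  - by case=> i _ ->; rewrite Dz dvdn_mulr.
rewrite card_imset ?card_ord ?divnK ?dvd_dn // => i j /eqP.
have lt (k : 'I_(n %/ d)) : (d * k < n)%N.
  by rewrite -{2}(divnK dvd_dn) mulnC ltn_pmul2r.
rewrite (eq_prim_root_expr hz) !modn_small ?lt // eqn_pmul2l // => /eqP.
exact: val_inj.
Qed.

Lemma partC_dvd : (d %| m + 1)%N.
Proof.
have [E [EA HE]] := key.
set M := (m%:R : algC).
have hN : (#|Dset|%:R * d%:R = M * M - 1 :> algC).
  by rewrite -natrM cardDset n_eq natrB ?natrM //; nia.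
have e1 : (#|F|)%:R *+ m = M * M * M :> algC by rewrite hq -mulr_natr natrM.
have e2 : (#|F|)%:R = M * M :> algC by rewrite hq natrM.
rewrite e1 e2 natrM -/M in HE.
have Mnz : M != 0 by rewrite pnatr_eq0; lia.
have M1 : M - 1 != 0.
  by rewrite subr_eq0; have : (m%:R : algC) != 1%:R by rewrite eqr_nat; lia.
rewrite -mulr_natr -/M in HE.
have dnz : (d%:R : algC) != 0 by rewrite pnatr_eq0; lia.
have H : d%:R * (M - E) = M + 1.
  have : (M * M) * (M - 1) * (d%:R * (M - E) - (M + 1)) = 0.
    have -> : (M * M) * (M - 1) * (d%:R * (M - E) - (M + 1)) =
       d%:R * ((M * M * M - M * M) * M - (M * M * #|Dset|%:R + E * (M * M * M - M * M)))
       + M * M * (#|Dset|%:R * d%:R - (M * M - 1)) by ring.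
    by rewrite HE hN !subrr !mulr0 addr0.
  move/eqP; rewrite !mulf_eq0 (negbTE Mnz) (negbTE M1) /= subr_eq0 => /eqP //.
have Ee : E = M - (M + 1) / d%:R by rewrite -H; field.
have Erat : E \in Crat by rewrite Ee rpredB ?rpred_div ?rpredD ?rpred_nat ?rpred1.
have Eint := Cint_rat_Aint Erat EA.
have wint : M - E \is a Num.int by rewrite rpredB ?rpred_nat.
have wge0 : 0 <= M - E.
  have -> : M - E = (M + 1) / d%:R by rewrite -H; field.
  by rewrite divr_ge0 ?addr_ge0 ?ler0n.
have : M - E \is a Num.nat by rewrite natrEint wint wge0.
case/natrP => k ek; move: H; rewrite ek -natrM natr1 => /eqP.
rewrite eqr_nat addn1 => /eqP <-; exact: dvdn_mulr.
Qed.

End PartC.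

End Main.

Local Notation v2r := VectorInternalTheory.v2r.
Local Notation v2r_inj := VectorInternalTheory.v2r_inj.

Lemma exists_psi (F : finFieldType) p (pcharF : p \in [pchar F]) :
  exists psi : F -> algC, (forall x y, psi (x + y) = psi x * psi y) /\
    (forall x, psi x ^+ p = 1) /\ exists x0, psi x0 != 1.
Proof.
have pr := pcharf_prime pcharF.
pose R := pPrimeCharType pcharF.
have v0 : v2r (0 : R) = 0.
  exact: (raddf0 (VectorInternalTheory.VectorInternalTheory_v2r__canonical__Algebra_Additive R)).
have vD (x y : R) : v2r (x + y) = v2r x + v2r y.
  exact: (raddfD (VectorInternalTheory.VectorInternalTheory_v2r__canonical__Algebra_Additive R)).
have [zeta hzeta] := C_prim_root_exists (prime_gt0 pr).
have vadd (a b : 'F_p) : nat_of_ord (a + b) = ((a + b) %% p)%N.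
  exact: (congr1 (fun k => (nat_of_ord a + nat_of_ord b) %% k)%N (Fp_cast pr)).
have vlt (a : 'F_p) : (nat_of_ord a < p)%N.
  by apply: leq_trans (ltn_ord a) _; rewrite Fp_cast.
have v1 : v2r (1 : R) != 0.
  apply/eqP => h; have : v2r (1 : R) = v2r (0 : R) by rewrite h v0.
  by move/v2r_inj/eqP; rewrite oner_eq0.
have [j hj] : exists j, v2r (1 : R) 0 j != 0.
  apply/existsP; apply: contraR v1 => /existsPn H; apply/eqP/matrixP => i k.
  by rewrite ord1 mxE; apply/eqP; have := H k; rewrite negbK.
exists (fun x : F => zeta ^+ (v2r (x : R) 0 j)); split; last split.
- move=> x y; rewrite -exprD -[RHS](expr_mod _ (prim_expr_order hzeta)).
  by rewrite -vadd vD mxE.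
- by move=> x; rewrite exprAC (prim_expr_order hzeta) expr1n.
- exists 1; rewrite -(prim_order_dvd hzeta).
  move: hj (vlt (v2r (1 : R) 0 j)); set a := v2r (1 : R) 0 j => hj ha.
  have : (0 < a)%N by rewrite lt0n; apply: contra hj => /eqP h; apply/eqP/val_inj.
  by move=> a0; apply/negP => /dvdn_leq; lia.
Qed.

Local Close Scope ring_scope.

Theorem theorem1p6 (p k d : nat) (F : finFieldType) :
  prime p -> odd p -> (0 < k)%N -> (1 < d)%N ->
  #|F| = ((p ^ k) ^ 2)%N ->
  ((p ^ k) ^ 2 = 1 %[mod 2 * d])%N ->
  (paley_clique_number F d = p ^ k <-> (d %| p ^ k + 1)%N) /\
  (~~ (d %| p ^ k + 1)%N -> (paley_clique_number F d <= p ^ k - 1)%N).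
Proof.
move=> pr podd k0 d1 hF hmod.
have pchar : p \in [pchar F]%R by apply: (@card_finPcharP _ p (k * 2)); rewrite // hF expnM.
set m := (p ^ k)%N in hF hmod *.
have hq : #|F| = (m * m)%N by rewrite hF mulnn.
have hm : (1 < m)%N.
  have := leq_pexp2l (prime_gt0 pr) k0; rewrite expn1 -/m.
  by have := prime_gt1 pr; lia.
have h2d : (2 * d %| m * m - 1)%N.
  by rewrite -eqn_mod_dvd ?mulnn ?hmod //; nia.
have hnat : ([pchar F]%R).-nat m by rewrite /m pnatX (pnatE _ pr) pchar.
have hfrob (x y : F) : ((x - y) ^+ m = x ^+ m - y ^+ m)%R.
  by rewrite exprDn_pchar // exprNn_pchar.
have [z hz] := prim_root_F F.
have ub : (paley_clique_number F d <= m)%N.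
  by apply/bigmax_leqP => S hS; exact: (clique_card hq hm d1 h2d hz hS).
have iff : paley_clique_number F d = m <-> (d %| m + 1)%N.
  split.
  - move=> hw.
    have [C hC eqC] : {C | C \in (fun S : {set F} => is_paley_clique d S) & paley_clique_number F d = #|C|}.
      apply: eq_bigmax_cond; apply/card_gt0P; exists set0.
      by rewrite unfold_in /is_paley_clique; apply/forallP => x; rewrite inE.
    have [psi [psiD [psi_root [x0 psi_nt]]]] := exists_psi pchar.
    apply: (partC_dvd hq hm d1 h2d hz psiD (prime_gt0 pr) psi_root psi_nt hC).
    by rewrite -eqC.
  - move=> hdm; apply/eqP; rewrite eqn_leq ub /=.
    apply: leq_trans (subfield_card hq hm d1 h2d hz hdm) _.
    exact: (leq_bigmax_cond _ (subfield_clique hq hm d1 h2d hz hfrob hdm)).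
split => // hnd.
have : paley_clique_number F d != m by apply/eqP => /iff; apply/negP.
by move: ub; lia.
Qed.
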